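(* Let $m\le k\le n$ be positive integers and $\mathbf a_1,\dots,\mathbf a_n\in\mathbb R^m$. Let $w^*=\max\{[\det(\sum_{i\in S}\mathbf a_i\mathbf a_i^\top)]^{1/m}: S\subseteq[n],\ |S|=k\}$, and let $(\hat{\mathbf x},\hat w)$ be an optimal solution of the convex relaxation $$\hat w=\max_{\mathbf x,w}\Big\{w:\ w\le \Big[\det\Big(\sum_{i\in[n]}x_i\mathbf a_i\mathbf a_i^\top\Big)\Big]^{1/m},\ \sum_{i\in[n]}x_i=k,\ \mathbf x\in[0,1]^n\Big\}.$$ Let $\alpha\in(0,1]$ and let $\mu$ be a probability distribution on the subsets of $[n]$ of size $k$ which is $m$-wise $\alpha$-positively correlated with respect to $\hat{\mathbf x}$, i.e. for a random set $\mathcal S\sim\mu$ and every $T\subseteq[n]$ with $|T|=m$ we have $\Pr[T\subseteq\mathcal S]\ge \alpha^m\prod_{i\in T}\hat x_i$. Then $$\Big\{\mathbb E\Big[\det\Big(\sum_{i\in\mathcal S}\mathbf a_i\mathbf a_i^\top\Big)\Big]\Big\}^{1/m}\ge \alpha\, w^*.$$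
   Context: $[n]=\{1,\dots,n\}$. The expectation is with respect to $\mathcal S\sim\mu$. *)

(* Defs.v *)
From HB Require Import structures.
From mathcomp Require Import all_boot all_order all_algebra.
From mathcomp Require Import reals exp.
Set Implicit Arguments. Unset Strict Implicit. Unset Printing Implicit Defensive.
Import Order.TTheory GRing.Theory Num.Theory.
Local Open Scope ring_scope.

Definition gram (R : realType) (n m : nat) (a : 'I_n -> 'cV[R]_m)
    (x : 'I_n -> R) : 'M[R]_m :=
  \sum_(i < n) x i *: (a i *m (a i)^T).

Definition gramS (R : realType) (n m : nat) (a : 'I_n -> 'cV[R]_m)
    (S : {set 'I_n}) : 'M[R]_m :=
  \sum_(i in S) a i *m (a i)^T.

Definition detroot (R : realType) (m : nat) (M : 'M[R]_m) : R :=
  powR (\det M) (m%:R^-1).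

(* w^* = max over |S| = k of det(\sum_{i in S} a_i a_i^T)^{1/m}.
   (The values are >= 0, so 0 is a neutral start for the max.) *)
Definition wstar (R : realType) (n m k : nat) (a : 'I_n -> 'cV[R]_m) : R :=
  \big[Num.max/0]_(S : {set 'I_n} | #|S| == k) detroot (gramS a S).

Definition relax_feasible (R : realType) (n m k : nat) (a : 'I_n -> 'cV[R]_m)
    (x : 'I_n -> R) (w : R) : Prop :=
  w <= detroot (gram a x) /\ \sum_(i < n) x i = k%:R /\
  (forall i, 0 <= x i <= 1).

Definition relax_optimal (R : realType) (n m k : nat) (a : 'I_n -> 'cV[R]_m)
    (x : 'I_n -> R) (w : R) : Prop :=
  relax_feasible k a x w /\
  forall x' w', relax_feasible k a x' w' -> w' <= w.

Definition k_subset_distribution (R : realType) (n k : nat)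
    (mu : {set 'I_n} -> R) : Prop :=
  (forall S : {set 'I_n}, 0 <= mu S) /\ \sum_(S : {set 'I_n}) mu S = 1 /\
  (forall S : {set 'I_n}, #|S| != k -> mu S = 0).

Definition prob_contains (R : realType) (n : nat) (mu : {set 'I_n} -> R)
    (T : {set 'I_n}) : R :=
  \sum_(S : {set 'I_n} | T \subset S) mu S.

Definition pos_correlated (R : realType) (n m : nat) (alpha : R)
    (x : 'I_n -> R) (mu : {set 'I_n} -> R) : Prop :=
  forall T : {set 'I_n}, #|T| = m ->
    alpha ^+ m * \prod_(i in T) x i <= prob_contains mu T.

Definition exp_det (R : realType) (n m : nat) (a : 'I_n -> 'cV[R]_m)
    (mu : {set 'I_n} -> R) : R :=
  \sum_(S : {set 'I_n}) mu S * \det (gramS a S).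

(* Main.v *)
Require Import Defs.
From HB Require Import structures.
From mathcomp Require Import all_boot all_order all_algebra.
From mathcomp Require Import reals exp.
Import Order.TTheory GRing.Theory Num.Theory.
Local Open Scope ring_scope.

From mathcomp Require Import perm.
Set Implicit Arguments. Unset Strict Implicit. Unset Printing Implicit Defensive.
Import Order.TTheory GRing.Theory Num.Theory.
Local Open Scope ring_scope.
Set Implicit Arguments. Unset Strict Implicit. Unset Printing Implicit Defensive.

Lemma detgramS_ge0 (R : realType) (n p : nat) (a : 'I_n -> 'cV[R]_p)
  (T : {set 'I_n}) : #|T| = p -> 0 <= \det (gramS a T).
Proof.
move=> HT; subst p.
set B := \matrix_(r < #|T|, j < #|T|) a (enum_val j) r 0.
have -> : gramS a T = B *m B^T.
  apply/matrixP => r s; rewrite /gramS big_enum_val summxE !mxE.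
  apply: eq_bigr => j _; rewrite !mxE big_ord1 !mxE; done.
by rewrite det_mulmx det_tr -expr2 sqr_ge0.
Qed.

Section Expand.
Variables (R : realType) (n m : nat) (a : 'I_n -> 'cV[R]_m).

Definition img (f : {ffun 'I_m -> 'I_n}) : {set 'I_n} := f @: [set: 'I_m].
Definition cf (f : {ffun 'I_m -> 'I_n}) : R :=
  (\prod_i a (f i) i 0) * \det (\matrix_(i, j) a (f i) j 0).
Definition CT (T : {set 'I_n}) : R := \sum_(f | img f == T) cf f.

Lemma gram_entry x i j : gram a x i j = \sum_k x k * (a k i 0 * a k j 0).
Proof.
rewrite /gram summxE; apply: eq_bigr => k _.
by rewrite !mxE big_ord1 !mxE.
Qed.

Lemma expand x : \det (gram a x) =
  \sum_(f : {ffun 'I_m -> 'I_n}) (\prod_i x (f i)) * cf f.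
Proof.
rewrite /determinant.
transitivity (\sum_(s : 'S_m) \sum_(f : {ffun 'I_m -> 'I_n})
   (-1) ^+ s * \prod_i (x (f i) * (a (f i) i 0 * a (f i) (s i) 0))).
  apply: eq_bigr => s _; rewrite -mulr_sumr; congr (_ * _).
  rewrite (eq_bigr (fun i => \sum_k x k * (a k i 0 * a k (s i) 0))); last first.
    by move=> i _; rewrite gram_entry.
  exact: (bigA_distr_bigA (fun i k => x k * (a k i 0 * a k (s i) 0))).
rewrite exchange_big /=; apply: eq_bigr => f _.
rewrite /cf /determinant mulr_sumr mulr_sumr; apply: eq_bigr => s _.
rewrite !big_split /=.
under [X in _ = _ * (_ * (_ * X))]eq_bigr => i _ do rewrite mxE.
move: ((-1) ^+ s) (\prod_i x (f i)) (\prod_i a (f i) i 0) (\prod_i a (f i) (s i) 0) => p q r t.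
by rewrite [LHS]mulrCA; congr (_ * _); rewrite mulrCA.
Qed.

Lemma cf0 f : (#|img f| < m)%N -> cf f = 0.
Proof.
move=> Hc.
case: (pickP [pred p : 'I_m * 'I_m | (p.1 != p.2) && (f p.1 == f p.2)]) => [[i1 i2] /andP[ne /eqP e] | none].
  rewrite /cf (@determinant_alternate _ _ _ i1 i2) ?mulr0 // => j.
  by rewrite !mxE e.
have injf : injective f.
  move=> i1 i2 e; move: (none (i1, i2)) => /= /negbT.
  by rewrite e eqxx andbT negbK => /eqP.
by move: Hc; rewrite /img card_imset // cardsT card_ord ltnn.
Qed.

Lemma expand2 x : \det (gram a x) =
  \sum_(T : {set 'I_n} | #|T| == m) (\prod_(j in T) x j) * CT T.
Proof.
rewrite expand (partition_big img predT) //=.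
rewrite (bigID (fun T : {set 'I_n} => #|T| == m)) /= [X in _ + X]big1 ?addr0.
  apply: eq_bigr => T /eqP HT; rewrite /CT mulr_sumr; apply: eq_bigr => f /eqP Hf.
  congr (_ * _); rewrite -Hf /img big_imset /=.
    by apply: eq_bigl => i; rewrite in_setT.
  apply/imset_injP; by rewrite -/(img f) Hf HT cardsT card_ord.
move=> T HT; apply: big1 => f /eqP Hf.
rewrite cf0 ?mulr0 //; rewrite ltn_neqAle Hf HT /=.
by rewrite -Hf /img (leq_trans (leq_imset_card _ _)) // cardsT card_ord.
Qed.

Lemma gram_ind (S : {set 'I_n}) : gram a (fun i => (i \in S)%:R) = gramS a S.
Proof.
rewrite /gram /gramS [RHS]big_mkcond /=; apply: eq_bigr => i _.
by case: (i \in S); rewrite ?scale1r ?scale0r.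
Qed.

Lemma prod_ind (T S : {set 'I_n}) :
  \prod_(j in T) ((j \in S)%:R : R) = (T \subset S)%:R.
Proof.
case: (boolP (T \subset S)) => H.
  by apply: big1 => j jT; rewrite (subsetP H j jT).
case/subsetPn: H => j jT jS.
by rewrite (bigD1 j) //= (negbTE jS) mul0r.
Qed.

Lemma CT_ge0 (T : {set 'I_n}) : #|T| = m -> 0 <= CT T.
Proof.
move=> HT; have := expand2 (fun i => (i \in T)%:R).
rewrite gram_ind (bigD1 T) ?HT ?eqxx //= prod_ind subxx mul1r big1 ?addr0.
  by move=> <-; apply: detgramS_ge0.
move=> T' /andP[/eqP HT' ne]; rewrite prod_ind.
case: (boolP (T' \subset T)) => sub; last by rewrite mul0r.
by move: ne; rewrite eqEcard sub HT HT' leqnn.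
Qed.

End Expand.

Unset Implicit Arguments.

Theorem lemma1 (R : realType) (n m k : nat) (a : 'I_n -> 'cV[R]_m)
    (xhat : 'I_n -> R) (what : R) (alpha : R) (mu : {set 'I_n} -> R) :
  (0 < m)%N -> (m <= k)%N -> (k <= n)%N ->
  relax_optimal k a xhat what ->
  0 < alpha <= 1 ->
  k_subset_distribution k mu ->
  pos_correlated m alpha xhat mu ->
  alpha * wstar k a <= powR (exp_det a mu) (m%:R^-1).
Proof.
move=> m0 mk kn [[wle [xsum xb]] opt] /andP[al0 al1] [mu0 [mu1 muk]] pc.
have xge0 i : 0 <= xhat i by case/andP: (xb i).
have E1 : exp_det a mu = \sum_(T : {set 'I_n} | #|T| == m) CT a T * prob_contains mu T.
  rewrite /exp_det.
  transitivity (\sum_(S : {set 'I_n}) \sum_(T : {set 'I_n} | #|T| == m)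
                  mu S * ((T \subset S)%:R * CT a T)).
    apply: eq_bigr => S _; rewrite -gram_ind expand2 mulr_sumr.
    by apply: eq_bigr => T _; rewrite prod_ind.
  rewrite exchange_big /=; apply: eq_bigr => T _.
  rewrite /prob_contains mulr_sumr [RHS]big_mkcond /=; apply: eq_bigr => S _.
  by case: (T \subset S); rewrite ?mul1r ?mul0r ?mulr0 // mulrC.
have CG : \det (gram a xhat) =
    \sum_(T : {set 'I_n} | #|T| == m) (\prod_(j in T) xhat j) * CT a T.
  exact: expand2.
have detG0 : 0 <= \det (gram a xhat).
  rewrite CG; apply: sumr_ge0 => T /eqP HT.
  by apply: mulr_ge0; [apply: prodr_ge0 => j _; apply: xge0 | apply: CT_ge0].
have E2 : alpha ^+ m * \det (gram a xhat) <= exp_det a mu.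
  rewrite E1 CG mulr_sumr; apply: ler_sum => T /eqP HT.
  rewrite mulrA [X in X <= _]mulrC; apply: ler_wpM2l; first exact: CT_ge0.
  exact: pc.
have what0 : 0 <= what.
  have n0 : (0 < n)%N by apply: leq_trans kn; apply: leq_trans mk.
  pose c : R := k%:R / n%:R.
  apply: (@le_trans _ _ 0); first by [].
  apply: (opt (fun _ => c) 0); split; first exact: powR_ge0.
  split.
    rewrite sumr_const card_ord /c -[_ / _ *+ n]mulr_natr divfK //.
    by rewrite pnatr_eq0 -lt0n.
  move=> i; apply/andP; split.
    by rewrite /c divr_ge0 ?ler0n.
  by rewrite /c ler_pdivrMr ?ltr0n // mul1r ler_nat.
have ws : wstar k a <= what.
  rewrite /wstar; apply: (big_ind (fun v => v <= what)) => //.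
    by move=> u v hu hv; rewrite ge_max hu hv.
  move=> S /eqP HS; apply: (opt (fun i => (i \in S)%:R)).
  split; first by rewrite gram_ind.
  split.
    transitivity (\sum_(i < n) if i \in S then (1 : R) else 0).
      by apply: eq_bigr => i _; case: (i \in S).
    by rewrite -big_mkcond sumr_const HS.
  by move=> i; case: (i \in S); rewrite ?ler01 ?lexx.
have m0R : (m%:R : R) != 0 by rewrite pnatr_eq0 -lt0n.
have al0' : 0 <= alpha by exact: ltW.
have key : alpha * detroot (gram a xhat) = powR (alpha ^+ m * \det (gram a xhat)) (m%:R^-1).
  rewrite powRM ?exprn_ge0 // /detroot; congr (_ * _).
  by rewrite -powR_mulrn // -powRrM mulfV // powRr1.
apply: (@le_trans _ _ (alpha * detroot (gram a xhat))).
  by apply: ler_wpM2l => //; apply: le_trans ws wle.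
rewrite key; apply: ge0_ler_powR => //.
- by rewrite invr_ge0 ler0n.
- by rewrite nnegrE mulr_ge0 ?exprn_ge0.
- by rewrite nnegrE; apply: le_trans E2; rewrite mulr_ge0 ?exprn_ge0.
Qed.
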